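(* Let $K$ be a field of characteristic zero, $x=(x_1,\dots,x_n)$, and let $F\in K[x]^n$ be a Keller map such that $\mathcal{J}F$ is symmetric. If for some index $i$, $F_i=c'x_i+x_i^2h+c$ for some $c,c'\in K$ and $h\in K[x]$, then $h=0$.
   Context: A Keller map is a polynomial map $F\in K[x]^n$ with $\det\mathcal{J}F\in K^{*}$, $\mathcal{J}$ the Jacobian matrix. *)

(* Defs.v *)
From mathcomp Require Import all_boot all_algebra.
From mathcomp Require Import mpoly.
Set Implicit Arguments. Unset Strict Implicit. Unset Printing Implicit Defensive.
Import GRing.Theory.
Local Open Scope ring_scope.

Definition jacobian (K : fieldType) (n : nat) (F : 'I_n -> {mpoly K[n]})
  : 'M[{mpoly K[n]}]_n :=
  \matrix_(i < n, j < n) (F i)^`M(j).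

Definition keller (K : fieldType) (n : nat) (F : 'I_n -> {mpoly K[n]}) : Prop :=
  exists c : K, c != 0 /\ \det (jacobian F) = c%:MP.

(* Main.v *)
Require Import Defs.
From mathcomp Require Import all_boot all_algebra.
From mathcomp Require Import mpoly.
From mathcomp Require Import ring.
Import GRing.Theory.
Local Open Scope ring_scope.
Section S.
Variables (K : fieldType) (n : nat).
Implicit Types (p q : {mpoly K[n]}).

Lemma dX (i j : 'I_n) : ('X_i : {mpoly K[n]})^`M(j) = (i == j)%:R.
Proof.
rewrite mderivX mnm1E; case: eqP => [->|_].
  by rewrite scale1r -mpolyX0; congr (mpolyX _ _); apply/mnmP=> k; rewrite !mnmE subnn.
by rewrite scale0r.
Qed.

Lemma dexp j p k : (p ^+ k.+1)^`M(j) = k.+1%:R * p ^+ k * p^`M(j).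
Proof.
elim: k => [|k IH]; first by rewrite expr1 expr0 mulr1 mul1r.
rewrite exprS mderivM IH exprS [k.+2%:R]mulrS; ring.
Qed.

Definition dv (d p : {mpoly K[n]}) := exists q, p = d * q.

Lemma dv0 d : dv d 0. Proof. by exists 0; rewrite mulr0. Qed.
Lemma dvD d p q : dv d p -> dv d q -> dv d (p + q).
Proof. by move=> [a ->] [b ->]; exists (a + b); rewrite mulrDr. Qed.
Lemma dvMr d p q : dv d p -> dv d (p * q).
Proof. by move=> [a ->]; exists (a * q); rewrite mulrA. Qed.
Lemma dvMl d p q : dv d q -> dv d (p * q).
Proof. by move=> [a ->]; exists (p * a); rewrite mulrCA. Qed.

Lemma dsign j k : (((-1) ^+ k : {mpoly K[n]}))^`M(j) = 0.
Proof.
elim: k => [|k IH]; first by rewrite expr0 -mpolyC1 mderivC.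
by rewrite exprS mderivM IH mulr0 addr0 mderivN -mpolyC1 mderivC oppr0 mul0r.
Qed.

Lemma dprod j d m (f : 'I_m -> {mpoly K[n]}) :
  (forall a, dv d ((f a)^`M(j))) -> dv d ((\prod_a f a)^`M(j)).
Proof.
move=> H; apply: (big_ind (fun x => dv d x^`M(j))).
- by rewrite -mpolyC1 mderivC; exact: dv0.
- by move=> x y Hx Hy; rewrite mderivM; apply: dvD; [apply: dvMr|apply: dvMl].
- by move=> a _; apply: H.
Qed.

Lemma ddet j d m (M : 'M[{mpoly K[n]}]_m) :
  (forall a b, dv d ((M a b)^`M(j))) -> dv d ((\det M)^`M(j)).
Proof.
move=> H; rewrite /determinant.
apply: (big_ind (fun x => dv d x^`M(j))).
- by rewrite mderiv0; exact: dv0.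
- by move=> x y Hx Hy; rewrite mderivD; apply: dvD.
move=> s _; rewrite mderivM dsign mul0r add0r; apply: dvMl.
by apply: dprod => a; apply: H.
Qed.

Lemma Xneq0 (i : 'I_n) : ('X_i : {mpoly K[n]}) != 0.
Proof.
apply/eqP=> h; have := @mcoeffXU n K i i; rewrite h mcoeff0 eqxx => /eqP.
by rewrite eq_sym oner_eq0.
Qed.

Lemma step (F : 'I_n -> {mpoly K[n]}) (dl : K) (i : 'I_n) (c c' : K) (g : {mpoly K[n]}) (k : nat) :
  [pchar K] =i pred0 -> dl != 0 -> \det (jacobian F) = dl%:MP ->
  (jacobian F)^T = jacobian F ->
  F i = c' *: 'X_i + 'X_i ^+ k.+2 * g + c%:MP -> dv 'X_i g.
Proof.
move=> ch0 dl0 Hdet Hsym HF.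
set x : {mpoly K[n]} := 'X_i.
set A := jacobian F.
have AE a b : A a b = (F a)^`M(b) by rewrite /A /jacobian mxE.
have sym a b : A a b = A b a.
  by have := congr1 (fun M : 'M_n => M b a) Hsym; rewrite mxE.
have Aij j : j != i -> A i j = x^+k.+2 * g^`M(j).
  move=> hj; rewrite AE HF !mderivD mderivZ mderivM dexp !dX mderivC.
  rewrite eq_sym (negbTE hj) scaler0 mulr0 mul0r !add0r addr0 //.
set s := (k.+2)%:R * g + x * g^`M(i).
have Aii : A i i = c'%:MP + x^+k.+1 * s.
  rewrite AE HF !mderivD mderivZ mderivM dexp !dX mderivC eqxx mulr1 addr0.
  rewrite -alg_mpolyC /s /x /= !exprS; ring.
have Hs : s = (k.+2)%:R * g + x * g^`M(i) by [].
clearbody s.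
have dA a b : a != i -> b != i -> (A a b)^`M(i) = x^+k.+2 * g^`M(a)^`M(b).
  move=> ha hb; rewrite AE mderiv_comm -AE sym Aij // mderivM dexp dX.
  by rewrite eq_sym (negbTE hb) mulr0 mul0r add0r.
set q := \sum_(j < n | j != i) g^`M(j) * cofactor A i j.
set C := cofactor A i i.
have E0 : dl%:MP = A i i * C + x^+k.+2 * q.
  rewrite -Hdet (expand_det_row _ i) (bigD1 i) //= -/A -/C; apply: congr1.
  rewrite /q big_distrr; apply: eq_bigr => j hj /=; by rewrite Aij // -mulrA.
have [w Hw] : dv (x^+k.+2) C^`M(i).
  rewrite /C /cofactor mderivM dsign mul0r add0r; apply: dvMl; apply: ddet => a b.
  rewrite !mxE -AE dA ?(eq_sym _ i) ?neq_lift //. exact: (ex_intro _ _ erefl).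
clearbody q C; rewrite Aii in E0.
have E1 : (0 : {mpoly K[n]}) = ((c'%:MP + x^+k.+1 * s) * C + x^+k.+2 * q)^`M(i).
  rewrite -E0; exact/esym/mderivC.
rewrite mderivD mderivM mderivM mderivD mderivC mderivM !dexp dX eqxx Hw in E1.
set Y := k.+1%:R * g^`M(i) * C + s^`M(i) * C + (c'%:MP + x * x^+k * s) * x * w
   + k.+2%:R * q + x * q^`M(i).
have E2 : x^+k * ((k.+1%:R * k.+2%:R) * g * C + x * Y) = 0.
  apply: (etrans _ (esym E1)); rewrite /Y Hs /= !exprS; ring.
have E3 : (k.+1%:R * k.+2%:R) * g * C = - (x * Y).
  move/eqP: E2; rewrite mulf_eq0 (negbTE (expf_neq0 _ (Xneq0 i))) /= addr_eq0.
  by move/eqP.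
set NK : K := k.+1%:R * k.+2%:R.
have NK0 : NK != 0.
  have h m : (m.+1%:R : K) != 0 by rewrite ((pcharf0P K).1 ch0).
  by rewrite mulf_neq0.
have HNK : (k.+1%:R * k.+2%:R : {mpoly K[n]}) = NK%:MP.
  by rewrite /NK mpolyCM !mpolyC_nat.
set T := x^+k * s * C + x^+k.+1 * q.
have E0' : dl%:MP = c'%:MP * C + x * T by rewrite E0 /T !exprS; ring.
exists (dl^-1%:MP * ((c' / NK)%:MP * (- Y) + g * T)).
have e1 : x * ((c' / NK)%:MP * (-Y)) = c'%:MP * g * C.
  transitivity ((c'/NK)%:MP * (NK%:MP * g * C)); first by rewrite -HNK E3; ring.
  by rewrite !mulrA -mpolyCM divfK.
transitivity (dl^-1%:MP * (x * ((c'/NK)%:MP * -Y) + x * (g * T))); last by ring.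
rewrite e1.
transitivity (dl^-1%:MP * (g * (c'%:MP * C + x * T))); last by ring.
by rewrite -E0' mulrCA -mpolyCM mulVf // mpolyC1 mulr1.
Qed.

Lemma all_pow_zero (i : 'I_n) (h : {mpoly K[n]}) :
  (forall k, dv ('X_i ^+ k) h) -> h = 0.
Proof.
move=> H; apply/eqP; apply/negPn/negP => h0.
have [hk Hk] := H (msize h).
have hk0 : hk != 0 by apply: contra h0; rewrite Hk => /eqP ->; rewrite mulr0.
have := msizeM (expf_neq0 (msize h) (Xneq0 i)) hk0.
rewrite -Hk mpolyXn msizeX mdegMn mdeg1 mul1n.
have : (0 < msize hk)%N by rewrite lt0n msize_poly_eq0.
case: (msize hk) => // m _ /= E.
by have := leqnn (msize h); rewrite {1}E addnS /= -ltnS ltnNge leq_addr.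
Qed.
End S.

Theorem lemma7p1 (K : fieldType) (n : nat) (F : 'I_n -> {mpoly K[n]}) :
  [pchar K] =i pred0 ->
  keller F ->
  (jacobian F)^T = jacobian F ->
  forall (i : 'I_n) (c c' : K) (h : {mpoly K[n]}),
    F i = c' *: 'X_i + 'X_i ^+ 2 * h + c%:MP ->
    h = 0.
Proof.
move=> ch0 [dl [dl0 Hdet]] Hsym i c c' h HF.
apply: (@all_pow_zero K n i) => k; elim: k => [|k [hk Hk]].
  by exists h; rewrite expr0 mul1r.
have [h' Hh'] : exists q, hk = 'X_i * q.
  apply: (@step K n F dl i c c' hk k) => //.
  by rewrite HF Hk mulrA -exprD.
by exists h'; rewrite Hk Hh' exprSr mulrA.
Qed.
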